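(* Let $\rho>0$ and $\kappa_0=1/\rho$. Consider the differential equation for a function $\tau(s)$ $$\frac{\rho^4\tau'^2}{9-4\rho^2\tau^2}=\rho^2\kappa_0^2-\frac12+\frac{\rho^2\tau^2}{9}\mp\frac16\sqrt{9-4\rho^2\tau^2}.$$ This equation (for one of the two sign choices) admits the explicit exact solution $$\tau(s)=\pm\frac{6\sqrt2}{\rho}\,\frac{\sqrt{Y(s)}\,|Y(s)-1|}{Y(s)^2+6Y(s)+1},\qquad Y(s)=C e^{\pm\frac{2\sqrt2}{\rho}s},$$ where $C>0$ is a constant of integration depending on the initial conditions.
   Context: This differential equation is the condition satisfied by the torsion $\tau(s)$ (as a function of arc length $s$, primes denoting $d/ds$) of a curve with constant curvature $\kappa_0$ lying on a circular cylinder of radius $\rho$. *)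

(* Defs.v *)
From Stdlib Require Import Reals.
From Coquelicot Require Import Coquelicot.
Open Scope R_scope.

Definition Ysol (rho C eps : R) (s : R) : R :=
  C * exp (eps * (2 * sqrt 2 / rho) * s).

Definition tausol (rho C eps sg : R) (s : R) : R :=
  let Y := Ysol rho C eps s in
  sg * (6 * sqrt 2 / rho) * (sqrt Y * Rabs (Y - 1) / (Y ^ 2 + 6 * Y + 1)).

(* The ODE at the point s, with derivative value d = tau'(s), tau value t = tau(s),
   and the sign choice "mp" (the symbol \mp: mp = 1 means "-", mp = -1 means "+"). *)
Definition torsion_ode (rho kappa0 mp t d : R) : Prop :=
  rho ^ 4 * d ^ 2 / (9 - 4 * rho ^ 2 * t ^ 2)
  = rho ^ 2 * kappa0 ^ 2 - 1 / 2 + rho ^ 2 * t ^ 2 / 9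
    - mp * (1 / 6) * sqrt (9 - 4 * rho ^ 2 * t ^ 2).

(* Main.v *)
Require Import Defs.
From Stdlib Require Import Reals Lra Psatz.
From Coquelicot Require Import Coquelicot.
Open Scope R_scope.

Theorem corollary3p4 :
  forall (rho C eps sg : R),
    0 < rho -> 0 < C ->
    (eps = 1 \/ eps = -1) -> (sg = 1 \/ sg = -1) ->
    let kappa0 := 1 / rho in
    forall s : R,
      Ysol rho C eps s <> 1 ->
      9 - 4 * rho ^ 2 * (tausol rho C eps sg s) ^ 2 <> 0 ->
      exists d : R,
        is_derive (tausol rho C eps sg) s d /\
        exists mp : R, (mp = 1 \/ mp = -1) /\
          torsion_ode rho kappa0 mp (tausol rho C eps sg s) d.
Proof.
intros rho C eps sg Hr HC Heps Hsg kappa0 s HY1 H9.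
assert (HYp : 0 < Ysol rho C eps s) by (unfold Ysol; apply Rmult_lt_0_compat; [lra| apply exp_pos]).
assert (HdY : is_derive (fun t => Ysol rho C eps t - 1) s (eps * (2 * sqrt 2 / rho) * Ysol rho C eps s)).
{ unfold Ysol. auto_derive; [easy|]. field. lra. }
assert (HYd : is_derive (Ysol rho C eps) s (eps * (2 * sqrt 2 / rho) * Ysol rho C eps s)).
{ unfold Ysol. auto_derive; [easy|]. field. lra. }
assert (HY : exists e, (e = 1 \/ e = -1) /\ Rabs (Ysol rho C eps s - 1) = e * (Ysol rho C eps s - 1)
   /\ sign (Ysol rho C eps s - 1) = e).
{ destruct (Rlt_dec 1 (Ysol rho C eps s)).
  - exists 1. rewrite Rabs_right, sign_eq_1; lra.
  - exists (-1). rewrite Rabs_left, sign_eq_m1; lra. }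
destruct HY as [e [He1 [He Hse]]].
pose proof (is_derive_Rabs _ _ _ HdY) as Hde.
cbv beta in Hde. rewrite Hse in Hde.
set (Y := Ysol rho C eps s) in *.
set (q := sqrt 2) in *.
assert (Hq : q * q = 2) by (apply sqrt_sqrt; lra).
set (r := sqrt Y).
assert (Hrr : r * r = Y) by (apply sqrt_sqrt; lra).
assert (Hr0 : 0 < r) by (apply sqrt_lt_R0; lra).
set (Q := Y ^ 2 + 6 * Y + 1).
assert (HQ : 0 < Q) by (unfold Q; nra).
set (A := Y ^ 2 - 10 * Y + 1).
exists (sg * (6 * q / rho) * (2 * q / rho) * eps *
   ((Y / (2 * r) * (e * (Y - 1)) + r * e * Y) * Q - r * (e * (Y - 1)) * ((2 * Y + 6) * Y)) / Q ^ 2).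
split.
- specialize (Hde ltac:(lra)).
  unfold tausol.
  set (g := fun u => Rabs (Ysol rho C eps u - 1)) in Hde.
  apply is_derive_ext with (f := fun t => sg * (6 * q / rho) * (sqrt (Ysol rho C eps t) * g t / (Ysol rho C eps t ^ 2 + 6 * Ysol rho C eps t + 1))).
  { intro t. unfold tausol, g. reflexivity. }
  auto_derive.
  { change (Ysol rho C eps s) with Y. repeat split; try (eexists; eassumption); try lra; nra. }
  replace (Derive (fun x : R => g x) s) with (e * (eps * (2 * q / rho) * Y)) by (symmetry; apply is_derive_unique; exact Hde).
  replace (Derive (fun x : R => Ysol rho C eps x) s) with (eps * (2 * q / rho) * Y) by (symmetry; apply is_derive_unique; exact HYd).
  change (Ysol rho C eps s) with Y. unfold g. change (Ysol rho C eps s) with Y. rewrite He. fold r. unfold Q.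
  field. unfold Q in HQ. repeat split; try lra; nra.
- assert (Htau : tausol rho C eps sg s = sg * (6 * q / rho) * (r * (e * (Y - 1)) / Q)).
  { unfold tausol. cbv zeta. change (Ysol rho C eps s) with Y. rewrite He. reflexivity. }
  rewrite Htau in H9 |- *.
  assert (HQe : Q = Y ^ 2 + 6 * Y + 1) by reflexivity.
  assert (HAe : A = Y ^ 2 - 10 * Y + 1) by reflexivity.
  clearbody Y q r Q A. subst Q A. subst Y.
  unfold torsion_ode.
  assert (Hss : forall z, (z = 1 \/ z = -1) -> z * z = 1) by (intros z [-> | ->]; ring).
  assert (Htau2 : (sg * (6 * q / rho) * (r * (e * (r*r - 1)) / ((r*r)^2 + 6*(r*r) + 1))) ^ 2 = 72 * (r*r) * (r*r - 1) ^ 2 / (rho ^ 2 * ((r*r)^2 + 6*(r*r) + 1) ^ 2)).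
  { replace ((sg * (6 * q / rho) * (r * (e * (r*r - 1)) / ((r*r)^2 + 6*(r*r) + 1))) ^ 2) with ((sg*sg) * (q*q) * 36 * (r*r) * (e*e) * (r*r-1)^2 / (rho^2 * ((r*r)^2 + 6*(r*r) + 1)^2)) by (field; lra).
    rewrite Hq, (Hss sg Hsg), (Hss e He1). field. lra. }
  rewrite Htau2 in H9 |- *.
  assert (H9' : 9 - 4 * rho ^ 2 * (72 * (r * r) * (r * r - 1) ^ 2 / (rho ^ 2 * ((r*r)^2 + 6*(r*r) + 1) ^ 2)) = (3 * ((r*r)^2 - 10*(r*r) + 1) / ((r*r)^2 + 6*(r*r) + 1)) ^ 2).
  { field. split; lra. }
  rewrite H9' in H9 |- *.
  set (Q := (r*r)^2 + 6*(r*r) + 1) in *.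
  set (A := (r*r)^2 - 10*(r*r) + 1) in *.
  replace (sqrt ((3 * A / Q) ^ 2)) with (Rabs (3 * A / Q)) by (rewrite <- sqrt_Rsqr_abs; unfold Rsqr; f_equal; ring).
  assert (HA0 : A <> 0) by (intro HA0; apply H9; rewrite HA0; field; lra).
  replace (sg * (6 * q / rho) * (2 * q / rho)) with (sg * 12 * (q*q) / rho^2) by (field; lra).
  rewrite Hq.
  assert (HRA : exists mp, (mp = 1 \/ mp = -1) /\ mp * Rabs (3 * A / Q) = 3 * A / Q).
  { destruct (Rlt_dec 0 A).
    - exists 1. split; [lra|]. rewrite Rabs_right. ring. apply Rle_ge. unfold Rdiv. apply Rmult_le_pos; [lra|]. left. apply Rinv_0_lt_compat. lra.
    - exists (-1). split; [lra|]. rewrite Rabs_left. ring. unfold Rdiv. assert (0 < / Q) by (apply Rinv_0_lt_compat; lra). nra. }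
  destruct HRA as [mp [Hmp HmpA]]. exists mp. split; [exact Hmp|].
  replace (mp * (1 / 6) * Rabs (3 * A / Q)) with ((1/6) * (mp * Rabs (3 * A / Q))) by ring.
  rewrite HmpA. unfold kappa0. subst Q A.
  destruct Hsg as [-> | ->]; destruct He1 as [-> | ->]; destruct Heps as [-> | ->]; field; repeat split; lra.
Qed.
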